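(* Let $\tau \ge 0$ be rational and let $(G,k)$ be an instance of $\tau$-Bounded-Density Edge Deletion, where $G$ has $m_G$ edges. Construct the 2-Layer General Transshipment instance $(D, c, \mathcal{B})$ as follows: $V(D) = V(G) \cup E(G)$ with $U = E(G)$ and $W = V(G)$; for every edge $e = \{u,v\} \in E(G)$ add the arcs $(e,u)$ and $(e,v)$ with capacity $1$; set $B_e = \{0,1\}$ for every $e \in E(G)$ and $B_v = [-\tau, 0]$ for every $v \in V(G)$. Then there is a $\mathcal{B}$-transshipment $f$ in $D$ with $\mathrm{val}(f) \ge m_G - k$ if and only if there is an edge set $F \subseteq E(G)$ with $|F| \le k$ and $\rho^*(G - F) \le \tau$.
   Context: Graphs are simple and undirected; the density of a graph with $n$ vertices and $m$ edges is $m/n$ (the empty graph has density $0$) and $\rho^*(G)$ is the maximum density of a subgraph of $G$. The problem $\tau$-Bounded-Density Edge Deletion asks, given $G$ and $k \in \mathbb{N}$, whether some $F \subseteq E(G)$ with $|F| \le k$ satisfies $\rho^*(G-F) \le \tau$. A digraph $D$ is 2-layered with parts $U, W$ if $V(D) = U \cup W$ is a disjoint union and $A(D) \subseteq U \times W$. An instance of 2-Layer General Transshipment consists of a 2-layered digraph $D$ with parts $U,W$, capacities $c: A(D) \to \mathbb{Q}_{\ge 0}$, and a collection $\mathcal{B} = \{B_v : v \in V(D)\}$ with $B_v \subseteq \mathbb{Q}_{\ge 0}$ for $v \in U$ and $B_v \subseteq \mathbb{Q}_{\le 0}$ for $v \in W$. For a function $f: A(D) \to \mathbb{Q}_{\ge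 0}$, the excess at $v$ is $f_\Sigma(v) = \sum_{(v,x) \in A(D)} f(v,x) - \sum_{(x,v) \in A(D)} f(x,v)$. A $\mathcal{B}$-transshipment is a function $f: A(D) \to \mathbb{Q}_{\ge 0}$ with $f(a) \le c(a)$ for all arcs $a$ and $f_\Sigma(v) \in B_v$ for all $v \in V(D)$. Its value is $\mathrm{val}(f) = \sum_{u \in U} f_\Sigma(u)$. The problem is to find a $\mathcal{B}$-transshipment of maximum value. *)

(* Defs.v *)
From HB Require Import structures.
From mathcomp Require Import all_boot all_order all_algebra.
Set Implicit Arguments. Unset Strict Implicit. Unset Printing Implicit Defensive.
Import Order.TTheory GRing.Theory Num.Theory.
Local Open Scope ring_scope.

(* A simple undirected graph on the finite vertex type V is given by its edge
   set E : {set {set V}}, every edge being a 2-element vertex set. *)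
Definition simple_edges (V : finType) (E : {set {set V}}) : Prop :=
  forall e, e \in E -> #|e| = 2%N.

Definition is_subgraph (V : finType) (E : {set {set V}})
    (S : {set V}) (E' : {set {set V}}) : bool :=
  (E' \subset E) && [forall e in E', e \subset S].

Definition density (n m : nat) : rat :=
  if n == 0%N then 0 else (m%:R / n%:R).

(* rho*(G): maximum density of a subgraph of G (all densities are >= 0, and
   the empty subgraph has density 0, so 0 is a neutral start value). *)
Definition rho_star (V : finType) (E : {set {set V}}) : rat :=
  \big[Num.max/0]_(S : {set V})
    \big[Num.max/0]_(E' : {set {set V}} | is_subgraph E S E')
      density #|S| #|E'|.

Definition del_edges (V : finType) (E F : {set {set V}}) : {set {set V}} :=
  E :\: F.

(* A 2-layered digraph with parts U ⊆ TU, W ⊆ TW (disjoint as they live in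
   different types), arcs A ⊆ U × W, capacities c, and sets B_v given as
   predicates on rat. A flow is a function f on arcs (values off A are
   irrelevant). *)
Section Transshipment.
Variables (TU TW : finType) (U : {set TU}) (W : {set TW})
  (A : {set TU * TW}) (c : TU * TW -> rat)
  (BU : TU -> rat -> Prop) (BW : TW -> rat -> Prop).

(* excess at u in U: outgoing minus incoming (no incoming arcs) *)
Definition excessU (f : TU * TW -> rat) (u : TU) : rat :=
  \sum_(a in A | a.1 == u) f a.
(* excess at w in W: outgoing (none) minus incoming *)
Definition excessW (f : TU * TW -> rat) (w : TW) : rat :=
  - \sum_(a in A | a.2 == w) f a.

Definition is_B_transshipment (f : TU * TW -> rat) : Prop :=
  [/\ (forall a, a \in A -> 0 <= f a /\ f a <= c a),
      (forall u, u \in U -> BU u (excessU f u)) &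
      (forall w, w \in W -> BW w (excessW f w))].

Definition ts_value (f : TU * TW -> rat) : rat := \sum_(u in U) excessU f u.
End Transshipment.

Section Construction.
Variables (V : finType) (E : {set {set V}}) (tau : rat).
Definition D_U : {set {set V}} := E.
Definition D_W : {set V} := [set: V].
Definition D_arcs : {set {set V} * V} := [set a | (a.1 \in E) && (a.2 \in a.1)].
Definition D_cap : {set V} * V -> rat := fun _ => 1.
Definition D_BU : {set V} -> rat -> Prop := fun _ x => x = 0 \/ x = 1.
Definition D_BW : V -> rat -> Prop := fun _ x => - tau <= x /\ x <= 0.
End Construction.

(* Main.v *)
Require Import Defs.
From HB Require Import structures.
From mathcomp Require Import all_boot all_order all_algebra.
From mathcomp Require Import zify lra.
Import Order.TTheory GRing.Theory Num.Theory.
Local Open Scope ring_scope.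

Section Hall.
Local Open Scope nat_scope.
Variables (X Y : finType) (adj : X -> Y -> bool).

Definition nbh (Z : {set X}) : {set Y} := [set y | [exists x in Z, adj x y]].

Lemma sum_sub_leq (T : finType) (A B : {set T}) (F : T -> nat) :
  A \subset B -> \sum_(i in A) F i <= \sum_(i in B) F i.
Proof.
move=> sAB; rewrite [in X in _ <= X](big_setID A) /=.
by rewrite (setIidPr sAB) leq_addr.
Qed.

Lemma nbhS (Z1 Z2 : {set X}) : Z1 \subset Z2 -> nbh Z1 \subset nbh Z2.
Proof.
move=> s; apply/subsetP => y; rewrite !inE => /existsP [x /andP [xZ a]].
by apply/existsP; exists x; rewrite (subsetP s) //.
Qed.

Lemma sum_upd (T : finType) (h : T -> nat) (x : T) (W : {set T}) :
  0 < h x ->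
  \sum_(z in W) (if z == x then (h x).-1 else h z) + (x \in W) = \sum_(z in W) h z.
Proof.
move=> hx; case: (boolP (x \in W)) => xW.
  rewrite (bigD1 x) //= [in RHS](bigD1 x) //= eqxx.
  rewrite (eq_bigr h); last by move=> i /andP [_ /negbTE ->].
  by rewrite /=; lia.
rewrite addn0; apply: eq_bigr => z zW.
case: eqP => // e; by rewrite -e zW in xW.
Qed.

Lemma hall : forall (D : nat) (d : X -> nat) (c : Y -> nat),
  \sum_x d x = D ->
  (forall Z : {set X}, \sum_(x in Z) d x <= \sum_(y in nbh Z) c y) ->
  exists g : X -> Y -> nat,
    [/\ (forall x y, ~~ adj x y -> g x y = 0),
        (forall x, \sum_y g x y = d x) &
        (forall y, \sum_x g x y <= c y)].
Proof.
elim/ltn_ind => D IH d c HD Hh.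
case: (posnP D) => [D0|Dpos].
  exists (fun _ _ => 0); split => //.
  - move=> x; rewrite big1 //.
    have: \sum_x d x == 0 by rewrite HD D0.
    by rewrite sum_nat_eq0 => /forallP /(_ x) /implyP /(_ isT) /eqP.
  - by move=> y; rewrite big1.
case: (boolP [exists Z : {set X}, [&& 0 < \sum_(x in Z) d x,
        \sum_(x in Z) d x < D & \sum_(x in Z) d x == \sum_(y in nbh Z) c y]]).
- case/existsP => Z /and3P [Zp ZD /eqP Zt].
  pose d1 x := if x \in Z then d x else 0.
  pose c1 y := if y \in nbh Z then c y else 0.
  pose d2 x := if x \in Z then 0 else d x.
  pose c2 y := if y \in nbh Z then 0 else c y.
  have s1 : \sum_x d1 x = \sum_(x in Z) d x by rewrite [RHS]big_mkcond.
  have s2 : \sum_x d2 x = D - \sum_(x in Z) d x.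
    have : \sum_x d x = \sum_x d1 x + \sum_x d2 x.
      rewrite -big_split; apply: eq_bigr => i _; rewrite /d1 /d2 /=; case: (i \in Z) => /=; by rewrite ?addn0.
    rewrite s1 HD; lia.
  have [g1 [g1a g1r g1c]] : exists g : X -> Y -> nat,
    [/\ (forall x y, ~~ adj x y -> g x y = 0),
        (forall x, \sum_y g x y = d1 x) &
        (forall y, \sum_x g x y <= c1 y)].
    apply: (IH _ ZD _ _ s1) => W.
    have e1 : \sum_(x in W) d1 x = \sum_(x in W :&: Z) d x.
      rewrite (big_setID (A:=W) Z) /= [X in _ + X]big1 ?addn0.
        by apply: eq_bigr => i; rewrite /d1 inE => /andP [_ ->].
      by move=> i; rewrite /d1 !inE => /andP [/negbTE -> _].
    rewrite e1; apply: (leq_trans (Hh _)).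
    have sN : nbh (W :&: Z) \subset nbh Z by apply: nbhS; apply: subsetIr.
    have -> : \sum_(y in nbh (W :&: Z)) c y = \sum_(y in nbh (W :&: Z)) c1 y.
      by apply: eq_bigr => y yN; rewrite /c1 (subsetP sN).
    by apply: sum_sub_leq; apply: nbhS; apply: subsetIl.
  have [g2 [g2a g2r g2c]] : exists g : X -> Y -> nat,
    [/\ (forall x y, ~~ adj x y -> g x y = 0),
        (forall x, \sum_y g x y = d2 x) &
        (forall y, \sum_x g x y <= c2 y)].
    apply: (IH (D - \sum_(x in Z) d x) _ _ _ s2); first by lia.
    move=> W.
    have e2 : \sum_(x in W) d2 x = \sum_(x in (W :|: Z) :\: Z) d x.
      rewrite (big_setID (A:=W) Z) /= big1 ?add0n; last first.
        by move=> i; rewrite /d2 inE => /andP [_ ->].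
      apply: eq_big => i; first by rewrite !inE; case: (i \in Z); rewrite ?andbF ?andbT ?orbF.
      by rewrite /d2 !inE => /andP [/negbTE ->].
    have hU := Hh (W :|: Z).
    rewrite (big_setID (A:=W :|: Z) Z) /= (setIidPr (subsetUr _ _)) in hU.
    rewrite (big_setID (A:=nbh (W :|: Z)) (nbh Z)) /= in hU.
    rewrite (setIidPr (@nbhS _ _ (subsetUr W Z))) -Zt in hU.
    rewrite e2.
    have hU' : \sum_(x in (W :|: Z) :\: Z) d x <= \sum_(y in nbh (W :|: Z) :\: nbh Z) c y by lia.
    apply: (leq_trans hU').
    have -> : \sum_(y in nbh (W :|: Z) :\: nbh Z) c y = \sum_(y in nbh (W :|: Z) :\: nbh Z) c2 y.
      by apply: eq_bigr => y; rewrite /c2 inE => /andP [/negbTE ->].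
    apply: sum_sub_leq; apply/subsetP => y; rewrite !inE => /andP [nZ /existsP [x /andP [xWZ a]]].
    apply/existsP; exists x; rewrite a andbT.
    move: xWZ; rewrite !inE => /orP [//|xZ].
    by case/negP: nZ; apply/existsP; exists x; rewrite xZ.
  exists (fun x y => g1 x y + g2 x y); split.
  + by move=> x y a; rewrite g1a // g2a.
  + by move=> x; rewrite big_split /= g1r g2r /d1 /d2; case: (x \in Z); rewrite ?addn0.
  + move=> y; rewrite big_split /=; apply: (leq_trans (leq_add (g1c y) (g2c y))).
    by rewrite /c1 /c2; case: (y \in nbh Z); rewrite ?addn0.
- move=> nT.
  have [x dx] : exists x, 0 < d x.
    case: (pickP (fun x => 0 < d x)) => [x dx|H]; first by exists x.
    have : \sum_x d x == 0 by rewrite sum_nat_eq0; apply/forallP => x; move: (H x) => /=; case: (d x).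
    by rewrite HD; move/eqP => D0; rewrite D0 in Dpos.
  have [y [axy cy]] : exists y, adj x y /\ 0 < c y.
    have hx := Hh [set x]; rewrite big_set1 in hx.
    have : ~~ [forall y, (y \in nbh [set x]) ==> (c y == 0)].
      apply/negP => /forallP H.
      have : \sum_(y in nbh [set x]) c y = 0.
        by rewrite big1 // => y yN; apply/eqP; exact: (implyP (H y) yN).
      lia.
    case/forallPn => y; rewrite negb_imply => /andP [yN cy].
    move: yN; rewrite inE => /existsP [x' /andP [x'x a]].
    move: x'x; rewrite inE => /eqP ex; subst x'.
    by exists y; split => //; rewrite lt0n.
  pose d' z := if z == x then (d x).-1 else d z.
  pose c' w := if w == y then (c y).-1 else c w.
  have sd' : \sum_z d' z = D.-1.
    have := @sum_upd _ d x [set: X] dx; rewrite in_setT.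
    have -> : \sum_(z in [set: X]) d' z = \sum_z d' z by apply: eq_bigl => z; rewrite in_setT.
    have -> : \sum_(z in [set: X]) d z = \sum_z d z by apply: eq_bigl => z; rewrite in_setT.
    rewrite HD /d'; lia.
  have [g [ga gr gc]] : exists g : X -> Y -> nat,
    [/\ (forall x y, ~~ adj x y -> g x y = 0),
        (forall x, \sum_y g x y = d' x) &
        (forall y, \sum_x g x y <= c' y)].
    apply: (IH D.-1 _ _ _ sd'); first by lia.
    move=> W.
    have e1 := @sum_upd _ d x W dx.
    have e2 := @sum_upd _ c y (nbh W) cy.
    have h := Hh W.
    rewrite /d' /c'.
    case: (boolP (y \in nbh W)) => yW; last first.
      have xW : x \notin W.
        apply/negP => xW; case/negP: yW; rewrite inE; apply/existsP; exists x.
        by rewrite xW axy.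
      move: e1 e2; rewrite (negbTE xW) (negbTE yW); lia.
    case: (boolP (x \in W)) => xW.
      move: e1 e2; rewrite xW yW; lia.
    move: e1 e2; rewrite (negbTE xW) yW /= => e1 e2.
    suff : \sum_(z in W) d z < \sum_(w in nbh W) c w by lia.
    have cyle : c y <= \sum_(w in nbh W) c w by rewrite (bigD1 y) //= leq_addr.
    case: (posnP (\sum_(z in W) d z)) => [->|Wp]; first by lia.
    have WD : \sum_(z in W) d z < D.
      have : \sum_(z in W) d z + d x <= D.
        have := @sum_sub_leq _ _ _ d (subsetT (x |: W)).
        have -> : \sum_(i in [set: X]) d i = \sum_i d i by apply: eq_bigl => i; rewrite in_setT.
        rewrite big_setU1 //= HD; lia.
      lia.
    rewrite ltn_neqAle h andbT; apply/negP => /eqP eq.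
    case/negP: nT; apply/existsP; exists W; by rewrite Wp WD eq eqxx.
  exists (fun z w => g z w + (if (z == x) && (w == y) then 1 else 0)); split.
  + move=> z w a; rewrite ga //.
    case: eqP => [ez|//]; case: eqP => [ew|//]; subst; by rewrite axy in a.
  + move=> z; rewrite big_split /= gr /d'.
    case: eqP => [ez|nz] /=; last by rewrite big1 ?addn0.
    rewrite -big_mkcond big_pred1_eq ez; lia.
  + move=> w; rewrite big_split /=; apply: (leq_trans (leq_add (gc w) (leqnn _))).
    rewrite /c'; case: eqP => [ew|nw].
      rewrite (eq_bigr (fun z => if z == x then 1 else 0)); last by move=> z _; rewrite andbT.
      rewrite -big_mkcond big_pred1_eq ew; lia.
    by rewrite big1 ?addn0 // => z _; rewrite andbF.
Qed.
End Hall.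
Arguments nbh {X Y} adj Z.
Arguments nbhS {X Y adj Z1 Z2}.

Lemma sum_pair (I J : finType) (P : pred (I * J)) (F : I * J -> rat) :
  \sum_(p | P p) F p = \sum_i \sum_(j | P (i, j)) F (i, j).
Proof. by rewrite pair_big_dep; apply: eq_big => -[i j]. Qed.

Lemma exU (V : finType) (E : {set {set V}}) h e : e \in E ->
  excessU (D_arcs E) h e = \sum_(v in e) h (e, v).
Proof.
move=> eE; rewrite /excessU sum_pair (bigD1 e) //= [X in _ + X]big1 ?addr0.
  by apply: eq_bigl => v; rewrite !inE /= eqxx eE andbT.
by move=> i ie; apply: big_pred0 => j; rewrite /= (negbTE ie) andbF.
Qed.

Lemma exW (V : finType) (E : {set {set V}}) h v :
  excessW (D_arcs E) h v = - \sum_(e in E | v \in e) h (e, v).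
Proof.
rewrite /excessW sum_pair; congr (- _).
rewrite [RHS]big_mkcond; apply: eq_bigr => i _ /=.
case: (boolP ((i \in E) && (v \in i))) => H.
  rewrite (big_pred1 v) // => j; rewrite !inE /=.
  by case: eqP => [->|]; rewrite ?H ?andbF ?andbT.
apply: big_pred0 => j; rewrite !inE /=.
by case: eqP => [->|]; rewrite ?(negbTE H) ?andbF ?andbT.
Qed.

Lemma sum_sub_ler (T : finType) (A B : {set T}) (F : T -> rat) :
  A \subset B -> (forall i, i \in B -> 0 <= F i) ->
  \sum_(i in A) F i <= \sum_(i in B) F i.
Proof.
move=> sAB F0; rewrite [in X in _ <= X](big_setID A) /= (setIidPr sAB) lerDl.
by apply: sumr_ge0 => i; rewrite inE => /andP [_ /F0].
Qed.

Lemma le_bigmax_cond (I : finType) (P : pred I) (F : I -> rat) j :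
  P j -> F j <= \big[Num.max/0]_(i | P i) F i.
Proof. by move=> Pj; rewrite (bigD1 j) //= le_max lexx. Qed.

Lemma forward (V : finType) (E : {set {set V}}) (tau : rat) (Htau : 0 <= tau) (k : nat) f :
  is_B_transshipment (D_U E) (D_W V) (D_arcs E) (@D_cap V) (@D_BU V) (@D_BW V tau) f ->
  (#|E|%:R - k%:R <= ts_value (D_U E) (D_arcs E) f) ->
  exists F : {set {set V}},
      [/\ F \subset E, (#|F| <= k)%N & rho_star (del_edges E F) <= tau].
Proof.
move=> [Harc HU HW] Hval.
pose ex e := excessU (D_arcs E) f e.
have H01 : forall e, e \in E -> ex e = 0 \/ ex e = 1 by move=> e eE; exact: HU e eE.
pose F := [set e in E | ex e == 0].
have sFE : F \subset E by apply/subsetP => e; rewrite inE => /andP [].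
have ex1 : forall e, e \in E :\: F -> ex e = 1.
  move=> e; rewrite !inE => /andP [nF eE]; rewrite eE /= in nF.
  by case: (H01 e eE) => // /eqP; rewrite (negbTE nF).
exists F; split => //.
- have val : ts_value (D_U E) (D_arcs E) f = #|E :\: F|%:R.
    rewrite /ts_value /D_U (big_setID F) /= big1 ?add0r.
      by rewrite (eq_bigr (fun _ => 1)) ?sumr_const // => e /ex1.
    by move=> e; rewrite !inE => /and3P [_ _ /eqP].
  have cF := cardsID F E; rewrite (setIidPr sFE) in cF.
  have : (#|F|%:R : rat) <= k%:R.
    by move: Hval; rewrite val -cF natrD; lra.
  by rewrite ler_nat.
- rewrite /rho_star; apply: bigmax_le => // S _; apply: bigmax_le => // E' /andP [sE' /forall_inP HS].
  rewrite /density; case: eqP => // /eqP S0.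
  rewrite ler_pdivrMr ?ltr0n ?lt0n //.
  have e1 : (#|E'|%:R : rat) = \sum_(e in E') \sum_(v in e) f (e, v).
    have -> : (#|E'|%:R : rat) = \sum_(e in E') (1 : rat) by rewrite sumr_const.
    apply: eq_bigr => e eE'.
    have eEF : e \in E :\: F by rewrite (subsetP sE').
    have eE : e \in E by move: eEF; rewrite inE => /andP [].
    by rewrite -(@exU _ E f e eE) -/(ex e) ex1.
  have e2 : \sum_(e in E') \sum_(v in e) f (e, v) <= \sum_(e in E) \sum_(v in S | v \in e) f (e, v).
    rewrite (eq_bigr (fun e : {set V} => \sum_(v in S | v \in e) f (e, v))).
      apply: sum_sub_ler; first by apply: (subset_trans sE'); apply: subsetDl.
      move=> e eE; apply: sumr_ge0 => v /andP [_ ve].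
      by case: (Harc (e, v)); rewrite // inE /= eE ve.
    move=> e eE'; apply: eq_bigl => v.
    have := subsetP (HS e eE') v; case: (v \in e); case: (v \in S) => //= H.
    by rewrite H.
  have e3 : \sum_(e in E) \sum_(v in S | v \in e) f (e, v) = \sum_(v in S) \sum_(e in E | v \in e) f (e, v).
    rewrite (exchange_big_dep (mem S)) /=; last by move=> e v _ /andP [].
    by apply: eq_bigr => v vS; apply: eq_bigl => e; rewrite vS.
  have e4 : \sum_(v in S) \sum_(e in E | v \in e) f (e, v) <= \sum_(v in S) tau.
    apply: ler_sum => v _.
    have := HW v; rewrite /D_W in_setT => /(_ isT); rewrite /D_BW exW.
    case=> h1 h2; lra.
  rewrite sumr_const -mulr_natr in e4.
  rewrite e1; apply: (le_trans e2); rewrite e3; exact: e4.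
Qed.

Lemma backward (V : finType) (E : {set {set V}}) (HE : simple_edges E)
  (tau : rat) (Htau : 0 <= tau) (k : nat) (F : {set {set V}}) :
  F \subset E -> (#|F| <= k)%N -> rho_star (del_edges E F) <= tau ->
  exists f : {set V} * V -> rat,
      is_B_transshipment (D_U E) (D_W V) (D_arcs E) (@D_cap V) (@D_BU V) (@D_BW V tau) f /\
      (#|E|%:R - k%:R <= ts_value (D_U E) (D_arcs E) f).
Proof.
move=> sFE Fk Hrho.
pose n := `|numq tau|%N; pose q := `|denq tau|%N.
have qpos : (0 < q)%N by rewrite /q absz_gt0 denq_neq0.
have qR : (0 : rat) < q%:R by rewrite ltr0n.
have tauE : tau = n%:R / q%:R.
  rewrite -[tau in LHS]divq_num_den; congr (_ / _).
    by rewrite -[numq tau]gez0_abs ?numq_ge0 // -abszE.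
  by rewrite -[denq tau]gez0_abs ?denq_ge0 // -abszE.
pose adj := fun (e : {set V}) (v : V) => v \in e.
pose d (e : {set V}) : nat := if e \in E :\: F then q else 0%N.
pose c (v : V) : nat := n.
have sumd : forall Z : {set {set V}}, \sum_(e in Z) d e = (#|Z :&: (E :\: F)| * q)%N.
  move=> Z; rewrite -sum_nat_const big_mkcond /= [RHS]big_mkcond /=.
  apply: eq_bigr => e _; rewrite /d in_setI; case: (e \in Z); case: (e \in E :\: F) => //.
have Hh : forall Z : {set {set V}}, (\sum_(e in Z) d e <= \sum_(v in nbh adj Z) c v)%N.
  move=> Z; pose E' := Z :&: (E :\: F); pose S := nbh adj E'.
  have rhs : (#|S| * n <= \sum_(v in nbh adj Z) c v)%N.
    rewrite sum_nat_const; apply: leq_mul => //; apply: subset_leq_card.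
    by apply: nbhS; apply: subsetIl.
  have key : (#|E'| * q <= #|S| * n)%N.
    case: (posnP #|S|) => S0.
      suff -> : #|E'| = 0%N by [].
      case: (set_0Vmem E') => [->|[e eE']]; first by rewrite cards0.
      exfalso.
      have eE : e \in E by move: eE'; rewrite !inE => /and3P [].
      have [v ve] : exists v, v \in e by apply/card_gt0P; rewrite (HE e eE).
      have vS : v \in S by rewrite inE; apply/existsP; exists e; rewrite eE'.
      have : (0 < #|S|)%N by apply/card_gt0P; exists v.
      by rewrite S0.
    have sub : is_subgraph (del_edges E F) S E'.
      rewrite /is_subgraph subsetIr /=; apply/forall_inP => e eE'.
      by apply/subsetP => v ve; rewrite inE; apply/existsP; exists e; rewrite eE'.
    have : density #|S| #|E'| <= tau.
      apply: le_trans Hrho; rewrite /rho_star.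
      apply: le_trans (@le_bigmax_cond _ xpredT _ S isT).
      exact: (@le_bigmax_cond _ (fun E' => is_subgraph (del_edges E F) S E') _ _ sub).
    rewrite /density -[#|S| == 0%N]negbK -lt0n S0 /= tauE.
    rewrite ler_pdivrMr ?ltr0n // mulrAC ler_pdivlMr // -!natrM ler_nat.
    by rewrite [(#|S| * n)%N]mulnC.
  by rewrite sumd; apply: leq_trans key rhs.
have [g [ga gr gc]] := @hall _ _ adj _ d c (erefl _) Hh.
pose f := fun a : {set V} * V => (g a.1 a.2)%:R / (q%:R : rat).
have exd : forall u, u \in E -> excessU (D_arcs E) f u = (d u)%:R / q%:R.
  move=> u uE; rewrite exU // /f /= -mulr_suml -natr_sum -(gr u).
  congr (_%:R / _); rewrite [RHS](bigID (fun v => v \in u)) /= [X in _ = (_ + X)%N]big1 ?addn0 //.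
  by move=> v vu; apply: ga.
exists f; split; first split.
- move=> [e v]; rewrite inE /= => /andP [eE ve]; rewrite /f /D_cap /=; split.
    by rewrite divr_ge0 ?ler0n.
  rewrite ler_pdivrMr // mul1r ler_nat.
  have : (g e v <= \sum_w g e w)%N by rewrite (bigD1 v) //= leq_addr.
  rewrite gr /d; case: ifP => // _ h; lia.
- move=> u uE; rewrite exd // /D_BU /d.
  case: ifP => _; [right; rewrite divff //; exact: lt0r_neq0 | left; rewrite mul0r //].
- move=> w _; rewrite exW /D_BW /f /= -mulr_suml -natr_sum.
  have h1 : (\sum_(e in E | w \in e) g e w <= n)%N.
    apply: leq_trans (gc w).
    by rewrite [X in (_ <= X)%N](bigID (fun e => (e \in E) && (w \in e))) /= leq_addr.
  split.
    rewrite lerN2 tauE ler_pM2r ?invr_gt0 // ler_nat //.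
  by rewrite oppr_le0 divr_ge0 ?ler0n.
- rewrite /ts_value /D_U (eq_bigr (fun u => (d u)%:R / q%:R)); last by move=> u uE; rewrite exd.
  rewrite -mulr_suml -natr_sum sumd (setIidPr (subsetDl E F)) natrM mulfK; last exact: lt0r_neq0.
  have cF := cardsID F E; rewrite (setIidPr sFE) in cF.
  have Fk' : (#|F|%:R : rat) <= k%:R by rewrite ler_nat.
  rewrite -cF natrD; lra.
Qed.

Theorem lemma6 (V : finType) (E : {set {set V}}) (HE : simple_edges E)
  (tau : rat) (Htau : 0 <= tau) (k : nat) :
  (exists f : {set V} * V -> rat,
      is_B_transshipment (D_U E) (D_W V) (D_arcs E) (@D_cap V) (@D_BU V) (@D_BW V tau) f /\
      (#|E|%:R - k%:R <= ts_value (D_U E) (D_arcs E) f))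
  <->
  (exists F : {set {set V}},
      [/\ F \subset E, (#|F| <= k)%N & rho_star (del_edges E F) <= tau]).
Proof.
split.
  by move=> [f [Hf Hv]]; exact: (@forward _ _ _ Htau _ _ Hf Hv).
by move=> [F [sFE Fk Hr]]; exact: (@backward _ _ HE _ Htau _ _ sFE Fk Hr).
Qed.
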